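(* Let $\mathcal X=\{1,\ldots,n\}$ be the vertex set of a directed graph with edge energies $U_{ij}\in[0,+\infty]$ (with $U_{ij}=+\infty$ allowed for absent links), and let $B=[b_{ij}]$, $b_{ij}=\exp(-U_{ij})$ (with $\exp(-\infty)=0$). Let $N\ge1$ be such that all entries of $B^N$ are positive, let $\lambda_B$ be the spectral radius of $B$, and let $u,v$ be vectors with positive entries such that $B^Tu=\lambda_Bu$, $Bv=\lambda_Bv$, $\sum_iu_iv_i=1$. Set $\mu_U(i)=u_iv_i$, $R_U=\lambda_B^{-1}\operatorname{diag}(v)^{-1}B\operatorname{diag}(v)$ with entries $(R_U)_{ij}$, and $\mathfrak M_U(x_0,\ldots,x_N)=\mu_U(x_0)(R_U)_{x_0x_1}\cdots(R_U)_{x_{N-1}x_N}$. Let $\mathfrak M^*_U[\delta_1,\delta_n]$ be the minimizer of $\mathbb D(P\|\mathfrak M_U)$ over all probability distributions $P$ on $\mathcal X^{N+1}$ whose marginal at time $0$ is the point mass at node $1$ and whose marginal at time $N$ is the point mass at node $n$. For a path $x=(x_0,\ldots,x_N)$ define its cost $\sum_{t=0}^{N-1}U_{x_tx_{t+1}}$. Then $\mathfrak M^*_U[\delta_1,\delta_n]$ assigns equal probability to any two paths $x\in\mathcal X^{N+1}$ with $x_0=1$, $x_N=n$ having equal cost; in particular, it assigns maximum and equal probability to the minimum-cost paths from $1$ to $n$ of length $N$.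
   Context: Relative entropy of a probability distribution $P$ with respect to a nonnegative measure $Q$ on a finite set: $\mathbb D(P\|Q)=\sum_x P(x)\log\frac{P(x)}{Q(x)}$ if $\mathrm{supp}(P)\subseteq\mathrm{supp}(Q)$ (with $0\log0=0$), and $+\infty$ otherwise. *)

(* Defs.v *)
From HB Require Import structures.
From mathcomp Require Import all_boot all_order all_algebra.
From mathcomp Require Import complex.
From mathcomp Require Import all_classical all_reals all_analysis.
Set Implicit Arguments. Unset Strict Implicit. Unset Printing Implicit Defensive.
Import Order.TTheory GRing.Theory Num.Theory.
Local Open Scope ring_scope.
Local Open Scope complex_scope.

Section Defs.
Variable R : realType.

Definition spectral_radius (k : nat) (A : 'M[R]_k) : R :=
  sup [set r : R | exists z : R[i],
        eigenvalue (map_mx (fun a : R => a%:C) A) z /\ `|z| = r%:C].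

Definition Bmat (k : nat) (U : 'I_k -> 'I_k -> \bar R) : 'M[R]_k :=
  \matrix_(i, j) fine (expeR (- U i j)%E).

Definition path_t (k N : nat) := {ffun 'I_N.+1 -> 'I_k}.

Definition marginal (k N : nat) (P : path_t k N -> R) (t : 'I_N.+1) (i : 'I_k) : R :=
  \sum_(x : path_t k N | x t == i) P x.

Definition is_distribution (T : finType) (P : T -> R) :=
  (forall x, 0 <= P x) /\ \sum_x P x = 1.

Definition relent (T : finType) (P Q : T -> R) : \bar R :=
  if [forall x, (P x != 0) ==> (Q x != 0)] then
    (\sum_x (if P x == 0 then 0 else P x * ln (P x / Q x)))%:E
  else +oo%E.

Definition path_measure (k N : nat) (mu : 'I_k -> R) (RU : 'M[R]_k)
  (x : path_t k N) : R :=
  mu (x ord0) * \prod_(0 <= t < N) RU (x (inord t)) (x (inord t.+1)).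

Definition path_cost (k N : nat) (U : 'I_k -> 'I_k -> \bar R) (x : path_t k N)
  : \bar R := (\sum_(0 <= t < N) U (x (inord t)) (x (inord t.+1)))%E.

Definition muU (k : nat) (u v : 'cV[R]_k) (i : 'I_k) : R := u i 0 * v i 0.

Definition RU (k : nat) (B : 'M[R]_k) (lam : R) (v : 'cV[R]_k) : 'M[R]_k :=
  lam^-1 *: (invmx (diag_mx v^T) *m B *m diag_mx v^T).

End Defs.

(* Main.v *)
Require Import Defs.
From HB Require Import structures.
From mathcomp Require Import all_boot all_order all_algebra.
From mathcomp Require Import complex.
From mathcomp Require Import all_classical all_reals all_analysis.
From mathcomp Require Import ring lra.
Import Order.TTheory GRing.Theory Num.Theory.
Local Open Scope ring_scope.

Section Helpers.
Variable R : realType.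

Lemma sum_pos_ex (T : finType) (F : T -> R) : 0 < \sum_i F i -> exists i, 0 < F i.
Proof.
case: (pickP (fun i => 0 < F i)) => [i Hi|H] Hs; first by exists i.
have : \sum_i F i <= 0 by apply: sumr_le0 => i _; rewrite leNgt H.
by rewrite leNgt Hs.
Qed.

Lemma path_exists (k : nat) (B : 'M[R]_k.+1) (hB : forall i j, 0 <= B i j) i0 n j :
  0 < (B ^+ n) i0 j -> exists f : nat -> 'I_k.+1,
  [/\ f 0%N = i0, f n = j & 0 < \prod_(0 <= t < n) B (f t) (f t.+1)].
Proof.
elim: n j => [|n IH] j.
  rewrite expr0 mxE; case: eqP => [<-|] //; last by rewrite ltxx.
  by move=> _; exists (fun _ => i0); rewrite big_geq.
rewrite exprSr mxE => /sum_pos_ex [l Hl].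
have Hb : 0 < B l j.
  rewrite lt_def hB andbT; apply/eqP => E; by rewrite E mulr0 ltxx in Hl.
have Ha : 0 < (B ^+ n) i0 l by rewrite -(pmulr_lgt0 _ Hb).
have [f [f0 fn fp]] := IH l Ha.
exists (fun t => if t == n.+1 then j else f t); split => //=; first by rewrite eqxx.
rewrite big_nat_recr //= eqxx ifN; last by rewrite neq_ltn ltnSn.
rewrite fn; apply: mulr_gt0 => //.
rewrite (eq_big_nat _ _ (F2 := fun t => B (f t) (f t.+1))) //.
move=> t /andP [_ Ht]; rewrite !ifN // neq_ltn ?ltnS ?Ht ?(ltnW Ht) //.
Qed.

Lemma RU_entry (k : nat) (B : 'M[R]_k) lam (v : 'cV[R]_k) (hv : forall i, 0 < v i 0) i j :
  RU B lam v i j = lam^-1 * ((v i 0)^-1 * B i j * v j 0).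
Proof.
rewrite /RU.
set D := diag_mx v^T.
set Di := diag_mx (\row_i (v i 0)^-1).
have HDDi : D *m Di = 1%:M.
  apply/matrixP => a b; rewrite mul_diag_mx !mxE.
  case: (eqVneq a b) => [->|nab]; last by rewrite mulr0n mulr0.
  by rewrite mulr1n mulfV // gt_eqF.
have Du : D \in unitmx.
  by case: (mulmx1_unit HDDi).
have -> : invmx D = Di.
  by rewrite -[invmx D]mulmx1 -HDDi mulmxA mulVmx // mul1mx.
rewrite mxE mul_mx_diag mxE mul_diag_mx mxE !mxE.
by rewrite mulrA.
Qed.

Lemma telescope (k : nat) (a : R) (g : 'I_k -> R) (hg : forall i, g i != 0)
  (h : 'I_k -> 'I_k -> R) (f : nat -> 'I_k) n :
  \prod_(0 <= t < n) (a * ((g (f t))^-1 * h (f t) (f t.+1) * g (f t.+1))) =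
  a ^+ n * ((g (f 0%N))^-1 * g (f n)) * \prod_(0 <= t < n) h (f t) (f t.+1).
Proof.
elim: n => [|n IH].
  by rewrite !big_geq // expr0 mulVf // !mulr1.
rewrite !big_nat_recr //= IH exprSr.
have := hg (f n); have := hg (f 0%N); move=> h0 hn.
field.
by rewrite h0 hn.
Qed.


Lemma supp_of_marg (k N : nat) (Q : path_t k N -> R) (hQ : forall x, 0 <= Q x)
  (t : 'I_N.+1) (k0 : 'I_k) :
  (forall i, marginal Q t i = (i == k0)%:R) -> forall x : path_t k N, x t != k0 -> Q x = 0.
Proof.
move=> hm x hx; have := hm (x t); rewrite (negbTE hx) /marginal => E.
exact: (psumr_eq0P (fun y _ => hQ y) E).
Qed.

Lemma marg_of_supp (k N : nat) (Q : path_t k N -> R) (t : 'I_N.+1) (k0 : 'I_k) :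
  (forall x : path_t k N, x t != k0 -> Q x = 0) -> \sum_(x : path_t k N) Q x = 1 ->
  forall i, marginal Q t i = (i == k0)%:R.
Proof.
move=> hs h1 i; rewrite /marginal.
case: (eqVneq i k0) => [->|nik] /=.
  rewrite ?eqxx -h1 [RHS](bigID (fun x : path_t k N => x t == k0)) /=.
  by rewrite [X in _ = _ + X]big1 ?addr0 // => x; exact: hs.
by rewrite big1 // => x /eqP hx; apply: hs; rewrite hx.
Qed.

Local Open Scope ereal_scope.
Lemma fin_expeRN (x : \bar R) : 0 <= x -> expeR (- x) \is a fin_num.
Proof.
move=> hx; rewrite ge0_fin_numE ?expeR_ge0 //.
apply: (@le_lt_trans _ _ 1%E); last by rewrite ltey.
by rewrite -expeR0 lee_expeR leeNl oppe0.
Qed.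

Lemma expeRN_mono (a b : \bar R) : 0 <= a -> a <= b ->
  (fine (expeR (- b)) <= fine (expeR (- a)))%R.
Proof.
move=> ha hab; apply: fine_le; rewrite ?fin_expeRN //; first exact: le_trans hab.
by rewrite lee_expeR leeN2.
Qed.

Lemma cost_weight (k : nat) (U : 'I_k -> 'I_k -> \bar R) (hU : forall i j, 0 <= U i j)
  (f : nat -> 'I_k) n :
  (\prod_(0 <= t < n) fine (expeR (- U (f t) (f t.+1))))%R =
  fine (expeR (- \sum_(0 <= t < n) U (f t) (f t.+1))).
Proof.
elim: n => [|n IH].
  by rewrite !big_geq // oppe0 expeR0.
have hS : 0 <= \sum_(0 <= t < n) U (f t) (f t.+1) by apply: sume_ge0.
rewrite !big_nat_recr //= IH oppeD; last by apply: ge0_adde_def; rewrite inE.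
rewrite expeRD fineM // fin_expeRN //.
Qed.
End Helpers.
Local Close Scope ereal_scope.


(* Vertex set {1,...,n} is modelled as 'I_m.+1 (n = m+1); node 1 is ord0 and
   node n is ord_max. *)
Theorem theorem6p1 (R : realType) (m N : nat)
  (U : 'I_m.+1 -> 'I_m.+1 -> \bar R)
  (hU : forall i j, (0 <= U i j)%E)
  (hN : (1 <= N)%N)
  (hprim : forall i j, 0 < (Bmat U ^+ N) i j)
  (lam : R) (hlam : lam = spectral_radius (Bmat U))
  (u v : 'cV[R]_m.+1)
  (hu : forall i, 0 < u i 0) (hv : forall i, 0 < v i 0)
  (hBu : (Bmat U)^T *m u = lam *: u)
  (hBv : Bmat U *m v = lam *: v)
  (huv : \sum_i u i 0 * v i 0 = 1)
  (P : path_t m.+1 N -> R)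
  (hP : is_distribution P)
  (hP0 : forall i, marginal P ord0 i = (i == ord0)%:R)
  (hPN : forall i, marginal P ord_max i = (i == ord_max)%:R)
  (hmin : forall Q : path_t m.+1 N -> R, is_distribution Q ->
      (forall i, marginal Q ord0 i = (i == ord0)%:R) ->
      (forall i, marginal Q ord_max i = (i == ord_max)%:R) ->
      (relent P (path_measure (muU u v) (RU (Bmat U) lam v)) <=
       relent Q (path_measure (muU u v) (RU (Bmat U) lam v)))%E) :
  (forall x y : path_t m.+1 N,
      x ord0 = ord0 -> x ord_max = ord_max ->
      y ord0 = ord0 -> y ord_max = ord_max ->
      path_cost U x = path_cost U y -> P x = P y) /\
  (forall x : path_t m.+1 N,
      x ord0 = ord0 -> x ord_max = ord_max ->
      (forall y : path_t m.+1 N, y ord0 = ord0 -> y ord_max = ord_max ->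
          (path_cost U x <= path_cost U y)%E) ->
      forall y : path_t m.+1 N, P y <= P x).

Proof.
set B := Bmat U.
pose M := path_measure (N:=N) (muU u v) (RU B lam v).
have hB : forall i j, 0 <= B i j by move=> i j; rewrite mxE fine_ge0 // expeR_ge0.
have lam_ge0 : 0 <= lam.
  have := congr1 (fun A : 'M[R]_(m.+1,1) => A ord0 0) hBv; rewrite !mxE => E.
  have : 0 <= lam * v ord0 0.
    by rewrite -E; apply: sumr_ge0 => j _; apply: mulr_ge0 => //; exact: ltW.
  by rewrite pmulr_lge0.
have lam_neq0 : lam != 0.
  apply/eqP => l0.
  have B0 : B = 0.
    apply/matrixP => i j.
    have := congr1 (fun A : 'M[R]_(m.+1,1) => A i 0) hBv; rewrite !mxE l0 mul0r => E.
    have := psumr_eq0P (fun k _ => mulr_ge0 (hB i k) (ltW (hv k))) E (i:=j) isT.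
    move/eqP; rewrite mulf_eq0 (gt_eqF (hv j)) orbF => Hij; by move: Hij; rewrite mxE => /eqP.
  have := hprim ord0 ord0; rewrite -/B B0 expr0n eqn0Ngt hN /= mxE ltxx //.
have lam_gt0 : 0 < lam by rewrite lt_def lam_neq0.
have eN : (inord N : 'I_N.+1) = ord_max by apply/val_inj; rewrite /= inordK.
have e0 : (inord 0 : 'I_N.+1) = ord0 by apply/val_inj; rewrite /= inordK.
pose W (x : path_t m.+1 N) := \prod_(0 <= t < N) B (x (inord t)) (x (inord t.+1)).
have W_ge0 : forall x, 0 <= W x by move=> x; apply: prodr_ge0 => t _.
have HM : forall x, M x = u (x ord0) 0 * v (x ord_max) 0 * lam^-1 ^+ N * W x.
  move=> x; rewrite /M /path_measure /muU.
  under eq_bigr do rewrite RU_entry //.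
  rewrite (@telescope R _ lam^-1 (fun i => v i 0) (fun i => lt0r_neq0 (hv i)) (fun i j => B i j) (fun t => x (inord t)) N).
  rewrite /= e0 eN /W.
  have := hv (x ord0); have := hv (x ord_max); move=> h1 h2.
  field; exact: lt0r_neq0.
have HWcost : forall x, W x = fine (expeR (- path_cost U x)%E).
  move=> x; rewrite /path_cost.
  have := @cost_weight R _ U hU (fun t => x (inord t)) N; rewrite /= => <-.
  by apply: eq_bigr => t _; rewrite mxE.
pose S (x : path_t m.+1 N) := (x ord0 == ord0) && (x ord_max == ord_max).
pose c := u ord0 0 * v ord_max 0 * lam^-1 ^+ N.
have c_gt0 : 0 < c.
  by rewrite /c !mulr_gt0 // exprn_gt0 // invr_gt0.
have HMS : forall x, S x -> M x = c * W x.
  by move=> x /andP [/eqP h0 /eqP h1]; rewrite HM h0 h1.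
have M_ge0 : forall x, 0 <= M x.
  move=> x; rewrite HM; apply: mulr_ge0 => //; apply: mulr_ge0; last by rewrite exprn_ge0 // invr_ge0.
  by apply: mulr_ge0; exact: ltW.
pose Z := \sum_(x | S x) M x.
have Z_gt0 : 0 < Z.
  have [f [f0 fN fp]] := @path_exists R _ B hB _ _ _ (hprim ord0 ord_max).
  pose x : path_t m.+1 N := [ffun t : 'I_N.+1 => f (val t)].
  have Sx : S x by rewrite /S !ffunE /= f0 fN !eqxx.
  have Wx : 0 < W x.
    rewrite /W (eq_big_nat _ _ (F2 := fun t => B (f t) (f t.+1))) // => t /andP [_ Ht].
    by rewrite !ffunE /= !inordK // ltnS ?Ht // ltnW.
  rewrite /Z (bigD1 x) //=.
  have : 0 <= \sum_(i | S i && (i != x)) M i by apply: sumr_ge0 => i _.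
  have : 0 < M x by rewrite HMS // mulr_gt0.
  lra.
pose Qs (x : path_t m.+1 N) := if S x then M x / Z else 0.
have Qs_ge0 : forall x, 0 <= Qs x.
  by move=> x; rewrite /Qs; case: ifP => // _; apply: divr_ge0 => //; exact: ltW.
have Qs_sum : \sum_x Qs x = 1.
  by rewrite /Qs -big_mkcond /= -mulr_suml -/Z mulfV // lt0r_neq0.
have Qs_supp : forall x, Qs x != 0 -> S x.
  by move=> x; rewrite /Qs; case: ifP => // _; rewrite eqxx.
have Qs_supp0 : forall x : path_t m.+1 N, x ord0 != ord0 -> Qs x = 0.
  move=> x hx; apply/eqP; apply: contraNT hx => /Qs_supp /andP [] //.
have Qs_suppN : forall x : path_t m.+1 N, x ord_max != ord_max -> Qs x = 0.
  move=> x hx; apply/eqP; apply: contraNT hx => /Qs_supp /andP [] //.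
have HQs : relent Qs M = (- ln Z)%:E.
  rewrite /relent.
  have -> : [forall x, (Qs x != 0) ==> (M x != 0)].
    apply/forallP => x; apply/implyP; rewrite /Qs; case: ifP => _; last by rewrite eqxx.
    by rewrite mulf_eq0 negb_or => /andP [].
  congr EFin.
  rewrite (eq_bigr (fun x => Qs x * - ln Z)); first by rewrite -mulr_suml Qs_sum mul1r.
  move=> x _; case: eqP => [->|/eqP nz]; first by rewrite mul0r.
  have Sx := Qs_supp x nz.
  move: nz; rewrite /Qs Sx => nz.
  have Mnz : M x != 0 by move: nz; rewrite mulf_eq0 negb_or => /andP [].
  have -> : M x / Z / M x = Z^-1 by field; rewrite Mnz lt0r_neq0.
  by rewrite lnV ?posrE // mulrN.
have hle := hmin Qs (conj Qs_ge0 Qs_sum) (@marg_of_supp R _ _ _ _ _ Qs_supp0 Qs_sum) (@marg_of_supp R _ _ _ _ _ Qs_suppN Qs_sum).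
rewrite -/M HQs /relent in hle.
case: ifP hle => [/forallP Hsupp|_]; last by rewrite leye_eq.
rewrite lee_fin => hle.
have [P_ge0 P_sum] := hP.
have P_supp0 := @supp_of_marg R _ _ P P_ge0 ord0 ord0 hP0.
have P_suppN := @supp_of_marg R _ _ P P_ge0 ord_max ord_max hPN.
have PS : forall x, P x != 0 -> S x.
  move=> x nz; apply/andP; split; apply: contraNT nz => h.
    by rewrite P_supp0 // eqxx.
  by rewrite P_suppN // eqxx.
have Qpos : forall x, P x != 0 -> 0 < Qs x.
  move=> x nz; rewrite /Qs (PS x nz); apply: divr_gt0 => //.
  by rewrite lt_def M_ge0 andbT; exact: (implyP (Hsupp x) nz).
have key : forall x, (if P x == 0 then 0 else P x * ln (P x / M x)) =
    (if P x == 0 then 0 else P x * ln (P x / Qs x)) - P x * ln Z.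
  move=> x; case: eqP => [->|/eqP nz]; first by rewrite mul0r subr0.
  have Mnz : M x != 0 := implyP (Hsupp x) nz.
  have Pp : 0 < P x by rewrite lt_def nz P_ge0.
  have Qp := Qpos x nz.
  have PQp : 0 < P x / Qs x by rewrite divr_gt0.
  have Zi : 0 < Z^-1 by rewrite invr_gt0.
  have -> : P x / M x = (P x / Qs x) * Z^-1.
    by rewrite /Qs (PS x nz); field; rewrite Mnz lt0r_neq0.
  rewrite lnM ?posrE // lnV ?posrE //; ring.
have hle2 : \sum_x (if P x == 0 then 0 else P x * ln (P x / Qs x)) <= 0.
  move: hle; rewrite (eq_bigr _ (fun x _ => key x)) sumrB -mulr_suml P_sum mul1r; lra.
pose g x := (if P x == 0 then 0 else P x * ln (P x / Qs x)) - P x + Qs x.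
have g_ge0 : forall x, 0 <= g x.
  move=> x; rewrite /g; case: eqP => [->|/eqP nz]; first by rewrite subr0 add0r.
  set p := P x; set q := Qs x.
  have pp : 0 < p by rewrite lt_def nz P_ge0.
  have qp : 0 < q := Qpos x nz.
  have rp : 0 < q / p by rewrite divr_gt0.
  have h := expR_ge1Dx (ln (q / p)); rewrite lnK ?posrE // in h.
  have -> : ln (p / q) = - ln (q / p) by rewrite -lnV ?posrE // invf_div.
  have e : p * (q / p) = q by rewrite mulrC divfK // lt0r_neq0.
  nra.
have g_sum : \sum_x g x <= 0.
  rewrite /g !big_split /= sumrN P_sum Qs_sum; lra.
have gE : \sum_x g x = 0 by apply/eqP; rewrite eq_le g_sum sumr_ge0.
have hPQ : forall x, P x = Qs x.
  move=> x; have := psumr_eq0P (fun y _ => g_ge0 y) gE (i := x) isT.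
  rewrite /g; case: eqP => [->|/eqP nz]; first by rewrite subr0 add0r.
  set p := P x; set q := Qs x.
  have pp : 0 < p by rewrite lt_def nz P_ge0.
  have qp : 0 < q := Qpos x nz.
  have rp : 0 < q / p by rewrite divr_gt0.
  have e : p * (q / p) = q by rewrite mulrC divfK // lt0r_neq0.
  have -> : ln (p / q) = - ln (q / p) by rewrite -lnV ?posrE // invf_div.
  case: (eqVneq (q / p) 1) => [E|NE] h0.
    by rewrite -[q](divfK (lt0r_neq0 pp)) E mul1r.
  have lnz : ln (q / p) != 0.
    apply: contra NE => /eqP h; by rewrite -(lnK (_ : q / p \is Num.pos)) ?h ?expR0 // posrE.
  have h := expR_gt1Dx lnz; rewrite lnK ?posrE // in h.
  exfalso; nra.
have cost_ge0 : forall x : path_t m.+1 N, (0%R <= path_cost U x)%E.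
  by move=> x; rewrite /path_cost; apply: sume_ge0 => t _; exact: hU.
split.
  move=> x y hx0 hxN hy0 hyN hc.
  have Sx : S x by rewrite /S hx0 hxN !eqxx.
  have Sy : S y by rewrite /S hy0 hyN !eqxx.
  by rewrite !hPQ /Qs Sx Sy !HMS // !HWcost hc.
move=> x hx0 hxN hmin' y.
have Sx : S x by rewrite /S hx0 hxN !eqxx.
rewrite !hPQ /Qs Sx; case: ifP => Sy; last first.
  by apply: divr_ge0 => //; exact: ltW.
rewrite !HMS //; apply: ler_wpM2r; first by rewrite invr_ge0 ltW.
apply: ler_wpM2l; first exact: ltW.
rewrite !HWcost; apply: expeRN_mono => //.
move/andP: Sy => [/eqP y0 /eqP yN]; exact: hmin'.
Qed.
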